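(* With the notation of the context, $\lim_{t\uparrow\tau}T_t=+\infty$ $\mathbb Q$-almost surely.
   Context: Fix $\gamma>0$, $D>0$. On a probability space $(\Omega_+,\mathcal F_+,\mathbb Q)$ let $x_-,y_-$ be real random variables with $x_->0$ a.s., and let $B$ be a standard Brownian motion independent of $(x_-,y_-)$. Define $\hat y(t)=e^{-\gamma t}y_-+\sqrt{2D}\int_0^t e^{-\gamma(t-s)}\,dB_s$, $t\ge0$, the random time $\tau=\inf\{s\ge0:\int_0^s\hat y(r)\,dr=x_-^{-3}/3\}$ (which is finite $\mathbb Q$-a.s.), the process $\hat x(t)=\big[x_-^{-3}-3\int_0^t\hat y(s)\,ds\big]^{-1/3}$ for $t<\tau$, and $T_t=\int_0^t\hat x(s)^4\,ds$ for $t<\tau$, $T_t=+\infty$ for $t\ge\tau$. *)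

(* Defs.v *)
From Stdlib Require List.
From HB Require Import structures.
From mathcomp Require Import all_boot all_order all_algebra.
From mathcomp Require Import all_classical all_reals all_analysis.
Set Implicit Arguments. Unset Strict Implicit. Unset Printing Implicit Defensive.
Import Order.TTheory GRing.Theory Num.Theory.
Import numFieldNormedType.Exports.
Local Open Scope classical_set_scope.
Local Open Scope ring_scope.

Section defs.
Context {R : realType} {d : measure_display} {T : measurableType d}.

Definition fd_event (I : Type) (X : I -> T -> R) (s : seq (I * set R)) : set T :=
  [set w | forall p, List.In p s -> p.2 (X p.1 w)].

(** independence of the sigma-algebras generated by two families of real
    random variables, expressed on the generating pi-systems of
    finite-dimensional cylinder events *)
Definition indep_families (P : probability T R) (I J : Type)
    (X : I -> T -> R) (Y : J -> T -> R) : Prop :=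
  forall (s1 : seq (I * set R)) (s2 : seq (J * set R)),
    (forall p, List.In p s1 -> measurable p.2) ->
    (forall p, List.In p s2 -> measurable p.2) ->
    (P (fd_event X s1 `&` fd_event Y s2) = P (fd_event X s1) * P (fd_event Y s2))%E.

Definition is_brownian_motion (P : probability T R) (B : R -> T -> R) : Prop :=
  [/\ (forall t, 0 <= t -> measurable_fun setT (B t)),
      (forall w, B 0 w = 0),
      (forall w, {within `[0, +oo[, continuous (fun t => B t w)}),
      (forall s t, 0 <= s < t -> forall A : set R, measurable A ->
          P ((fun w => B t w - B s w) @^-1` A) = normal_prob 0 (Num.sqrt (t - s)) A) &
      (forall s t, 0 <= s <= t ->
          indep_families P (fun u : {u : R | 0 <= u <= s} => B (proj1_sig u))
                           (fun _ : unit => fun w => B t w - B s w))].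

Variables (gamma D : R) (xm ym : T -> R) (B : R -> T -> R).

(** Wiener integral \int_0^t e^{-gamma (t-s)} dB_s, defined pathwise by
    integration by parts (deterministic C^1 integrand):
    B_t - gamma \int_0^t e^{-gamma (t-s)} B_s ds *)
Definition wiener_OU (w : T) (t : R) : R :=
  B t w - gamma * Rintegral lebesgue_measure `[0, t]
                    (fun s => expR (- gamma * (t - s)) * B s w).

Definition yhat (w : T) (t : R) : R :=
  expR (- gamma * t) * ym w + Num.sqrt (2 * D) * wiener_OU w t.

Definition Yint (w : T) (t : R) : R :=
  Rintegral lebesgue_measure `[0, t] (yhat w).

Definition tau (w : T) : \bar R :=
  ereal_inf [set r%:E | r in [set r | 0 <= r /\ Yint w r = (xm w) ^- 3 / 3]].

Definition xhat (w : T) (t : R) : R :=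
  powR ((xm w) ^- 3 - 3 * Yint w t) (- 3^-1).

Definition Ttime (w : T) (t : R) : \bar R :=
  if (t%:E < tau w)%E
  then (Rintegral lebesgue_measure `[0, t] (fun s => xhat w s ^+ 4))%:E
  else +oo%E.

End defs.

(* Main.v *)
Require Import Defs.
From HB Require Import structures.
From mathcomp Require Import all_boot all_order all_algebra.
From mathcomp Require Import all_classical all_reals all_analysis.
From mathcomp Require Import ring lra.
Import Order.TTheory GRing.Theory Num.Theory.
Import numFieldNormedType.Exports.
Import Num.Def.
Local Open Scope classical_set_scope.
Local Open Scope ring_scope.

Section S.
Context {R : realType}.
Notation mu := (@lebesgue_measure R).

Lemma cont_pint (g : R -> R) L : 0 <= L -> {within `[0,L], continuous g} ->
  {within `[0,L], continuous (fun t => Rintegral mu `[0,t] g)}.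
Proof.
move=> L0 cg; apply: parameterized_integral_continuous => //.
apply: continuous_compact_integrable => //; exact: segment_compact.
Qed.

Lemma int_cont (g : R -> R) a b : {within `[a,b], continuous g} ->
  mu.-integrable `[a,b] (EFin \o g).
Proof. by move=> cg; apply: continuous_compact_integrable => //; exact: segment_compact. Qed.

Lemma within_eq (A : set R) (f g : R -> R) : {in A, f =1 g} ->
  {within A, continuous f} -> {within A, continuous g}.
Proof. by move=> fg; apply: subspace_eq_continuous. Qed.

Lemma cont_exp (k : R) : continuous (fun t : R => expR (k * t)).
Proof.
move=> t; apply: continuous_comp; last exact: continuous_expR.
by apply: cvgM; [exact: cvg_cst|exact: cvg_id].
Qed.

Lemma cube_powR (v : R) : 0 <= v -> (powR v (- 3^-1)) ^+ 3 = v^-1.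
Proof.
move=> v0; rewrite -powR_mulrn ?powR_ge0// -powRrM.
rewrite (_ : - 3^-1 * 3%:R = -1 :> R) ?powR_inv1//.
by rewrite mulNr mulVf.
Qed.

Lemma sub_itv0 (L : R) : `[0, L] `<=` (`[0, +oo[ : set R).
Proof. by move=> s; rewrite /= !in_itv /= => /andP[-> _]. Qed.

Lemma sub_itvL (a b L : R) : 0 <= a -> b <= L -> `[a, b] `<=` (`[0, L] : set R).
Proof.
move=> a0 bL s; rewrite /= !in_itv /= => /andP[aS sb].
by rewrite (le_trans a0 aS) (le_trans sb bL).
Qed.
Lemma int_oc (g : R -> R) a b : {within `[a,b], continuous g} ->
  mu.-integrable `]a,b] (EFin \o g).
Proof.
move=> cg; apply: integrableS (int_cont _ _ _ cg) => //.
exact: subset_itv_oc_cc.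
Qed.
Lemma cont_pow4 : continuous (fun y : R => expR (- 3^-1 * y) ^+ 4).
Proof.
move=> y.
exact: (@continuous_comp R R R (fun y => expR (- 3^-1 * y)) (fun z => z ^+ 4) y
  (cont_exp _ y) (@exprn_continuous R 4 _)).
Qed.
End S.
Section core.
Context {R : realType} {d : measure_display} {T : measurableType d}.
Notation mu := (@lebesgue_measure R).
Variables (gamma D : R) (xm ym : T -> R) (B : R -> T -> R) (w : T).
Hypothesis Bc : {within `[0,+oo[, continuous (fun t => B t w)}.

Let yh := yhat gamma D ym B w.
Let Y := Yint gamma D ym B w.

Lemma yh_cont L : 0 <= L -> {within `[0,L], continuous yh}.
Proof.
move=> L0.
have bc : {within `[0,L], continuous (fun t => B t w)}.
  exact: continuous_subspaceW (@sub_itv0 R L) Bc.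
pose g s := expR (gamma * s) * B s w.
have gc : {within `[0,L], continuous g}.
  move=> s; apply: cvgM; last exact: bc s.
  exact: (@continuous_subspaceT _ _ `[0, L] _ (@cont_exp R gamma) s).
have J := cont_pint _ _ L0 gc.
apply: (@within_eq R _ (fun t => expR (- gamma * t) * ym w + Num.sqrt (2 * D) *
   (B t w - gamma * (expR (- gamma * t) * Rintegral mu `[0,t] g)))).
- move=> t; rewrite inE /= in_itv /= => /andP[t0 tL].
  rewrite /yh /yhat /wiener_OU -RintegralZl //; last first.
    apply: int_cont; exact: continuous_subspaceW (sub_itvL _ _ _ (lexx 0) tL) gc.
  congr (_ + _ * (_ - _ * _)).

  apply: eq_Rintegral => s _; rewrite mulrA -expRD; congr (expR _ * _).
  ring.
- move=> t; apply: cvgD.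
    apply: cvgMl; exact: (@continuous_subspaceT _ _ `[0, L] _ (@cont_exp R (- gamma)) t).
  apply: cvgMr; apply: cvgB; first exact: bc t.
  apply: cvgMr; apply: cvgM; last exact: J t.
  exact: (@continuous_subspaceT _ _ `[0, L] _ (@cont_exp R (- gamma)) t).
Qed.


Lemma Y_cont L : 0 <= L -> {within `[0,L], continuous Y}.
Proof. by move=> L0; apply: cont_pint => //; exact: yh_cont. Qed.

Lemma yh_bound L : 0 <= L ->
  exists2 M, 0 < M & forall s, 0 <= s -> s <= L -> `|yh s| <= M.
Proof.
move=> L0.
have hc : {within `[0, L], continuous (fun s => `|yh s|)}.
  by move=> s; apply: cvg_norm; exact: yh_cont.
have [c _ cmax] := @EVT_max R (fun s => `|yh s|) 0 L L0 hc.
exists (`|yh c| + 1); first by rewrite ltr_pwDr.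
move=> s s0 sL; apply: le_trans (cmax s _) _; first by rewrite in_itv /= s0 sL.
by rewrite lerDl.
Qed.

Lemma Y0 : Y 0 = 0.
Proof. by rewrite /Y /Yint set_itv1 Rintegral_set1. Qed.

Lemma Y_lip L M : 0 <= L -> (forall s, 0 <= s -> s <= L -> `|yh s| <= M) ->
  forall s s', 0 <= s -> s <= s' -> s' <= L -> Y s' - Y s <= M * (s' - s).
Proof.
move=> L0 hM s s' s0 ss' s'L.
have iy : mu.-integrable `[0, s'] (EFin \o yh).
  apply: int_cont; apply: continuous_subspaceW (yh_cont _ L0).
  exact: sub_itvL.
rewrite /Y /Yint Rintegral_itvB //.
have iy2 : mu.-integrable `]s, s'] (EFin \o yh).
  apply: integrableS iy => //; apply: subset_itvr; by rewrite bnd_simp.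
apply: le_trans (ler_norm _) _.
apply: le_trans (le_normr_Rintegral _ _) _ => //.
apply: (@le_trans _ _ (Rintegral mu `]s, s'] (fun=> M))).
  apply: le_Rintegral => //.
  - have hc : {within `[s, s'], continuous yh}.
      by apply: continuous_subspaceW (yh_cont _ L0); exact: sub_itvL.
    by apply: int_oc => t; apply: cvg_norm; exact: hc.
  - apply: int_oc => t; exact: cvg_cst.
  move=> t; rewrite /= in_itv /= => /andP[st ts']; apply: hM.
    by rewrite (le_trans s0) // ltW.
  by rewrite (le_trans ts').
rewrite Rintegral_cst // (_ : fine _ = s' - s) //.
apply: (eq_trans (congr1 fine (lebesgue_measure_itv `]s, s']))) => /=.
rewrite lte_fin; case: ltgtP ss' => //; last by move=> -> _; rewrite subrr.
Qed.

Lemma core : 0 < xm w -> (tau gamma D xm ym B w < +oo)%E ->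
  exists r : R, tau gamma D xm ym B w = r%:E /\
      (Ttime gamma D xm ym B w t @[t --> r^'-] --> +oo%E).
Proof.
move=> x0 tfin.
set c := xm w ^- 3 / 3.
have c0 : 0 < c by rewrite divr_gt0 // invr_gt0 exprn_gt0.
have tge0 : (0 <= tau gamma D xm ym B w)%E.
  by apply: le_ereal_inf_tmp => _ [s [s0 _] <-]; rewrite lee_fin.
have tfn : tau gamma D xm ym B w \is a fin_num by rewrite ge0_fin_numE.
set r := fine (tau gamma D xm ym B w).
have tr : tau gamma D xm ym B w = r%:E by rewrite fineK.
exists r; split => //.
have E1 : forall s, 0 <= s -> Y s = c -> r <= s.
  move=> s s0 Ys; rewrite -lee_fin -tr; apply: ereal_inf_lbound; by exists s.
have E2 : forall e, 0 < e -> exists s, [/\ 0 <= s, Y s = c & s < r + e].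
  move=> e e0; have [_ [s [s0 Ys] <-]] := lb_ereal_inf_adherent e0 tfn.
  rewrite -/(tau gamma D xm ym B w) tr -EFinD lte_fin => sr.
  by exists s.
pose L := `|r| + 1.
have L0 : 0 <= L by rewrite /L addr_ge0.
have [M M0 hM] := yh_bound L L0.
have lip := Y_lip L M L0 hM.
have r0 : 0 < r.
  have e0 : 0 < minr 1 (c / (2 * M)) by rewrite lt_min ltr01 divr_gt0 // mulr_gt0.
  have [s [s0 Ys sr]] := E2 _ e0.
  have e1 : minr 1 (c / (2 * M)) <= 1 by rewrite ge_min lexx.
  have e2 : minr 1 (c / (2 * M)) <= c / (2 * M) by rewrite ge_min lexx orbT.
  have rL : r <= `|r| by exact: ler_norm.
  have sL : s <= L by rewrite /L; lra.
  have := lip 0 s (lexx 0) s0 sL; rewrite Y0 Ys !subr0 => cMs.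
  have : M * s < M * (r + minr 1 (c / (2 * M))) by rewrite ltr_pM2l.
  have : M * minr 1 (c / (2 * M)) <= M * (c / (2 * M)) by rewrite ler_pM2l.
  have -> : M * (c / (2 * M)) = c / 2 by field; rewrite gt_eqF.
  rewrite mulrDr => h1 h2.
  have Mr : 0 < M * r by lra.
  by rewrite -(pmulr_rgt0 _ M0).
have rL1 : r + 1 <= L by rewrite /L lerD2r ler_norm.
have E4 : forall s, 0 <= s -> s < r -> Y s < c.
  move=> s s0 sr; rewrite ltNge; apply/negP => cs.
  have sL : s <= L by lra.
  have Yc : {within `[0, s], continuous Y}.
    by apply: continuous_subspaceW (Y_cont _ L0); exact: sub_itvL.
  have [u uin Yu] : exists2 u, u \in `[0, s] & Y u = c.
    by apply: IVT s0 Yc _; rewrite Y0 ge_min le_max (ltW c0) cs orbT.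
  move: uin; rewrite in_itv /= => /andP[u0 us].
  have := E1 u u0 Yu; lra.
pose base s := xm w ^- 3 - 3 * Y s.
have bE : forall s, base s = 3 * (c - Y s).
  by move=> s; rewrite /base /c mulrBr mulrCA mulfV ?mulr1 // pnatr_eq0.
have bpos : forall s, 0 <= s -> s < r -> 0 < base s.
  by move=> s s0 sr; rewrite bE mulr_gt0 // subr_gt0 E4.
apply/cvgeyPge => A.
pose Bv := 9 * M * (`|A| + 1).
have Bv0 : 0 < Bv by rewrite /Bv !mulr_gt0 // ltr_pwDr.
pose del := minr (r / 2) (minr 1 (Bv ^- 3 / (9 * M))).
have del0 : 0 < del.
  by rewrite /del !lt_min divr_gt0 //= ltr01 divr_gt0 ?invr_gt0 ?exprn_gt0 ?mulr_gt0.
have d1 : del <= r / 2 by rewrite /del ge_min lexx.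
have d2 : del <= 1 by rewrite /del !ge_min lexx orbT.
have d3 : del <= Bv ^- 3 / (9 * M) by rewrite /del !ge_min lexx !orbT.
near=> t.
have tr' : t < r by near: t; exact: nbhs_left_lt.
have rt : r - del < t.
  by near: t; apply: nbhs_left_gt; rewrite ltrBlDr ltrDl.
rewrite /Ttime tr lte_fin tr' lee_fin.
pose a := 2 * t - r.
have a0 : 0 <= a by rewrite /a; lra.
have at' : a <= t by rewrite /a; lra.
have t0 : 0 <= t by lra.
pose u := 9 * M * (r - t).
have u0 : 0 < u by rewrite /u !mulr_gt0 // subr_gt0.
pose k := powR u (- 3^-1).
have k0 : 0 <= k := powR_ge0 _ _.
have k3 : k ^+ 3 = u^-1 by rewrite cube_powR // ltW.
have uB : u <= Bv ^- 3.
  have : 9 * M * (r - t) <= 9 * M * (Bv ^- 3 / (9 * M)).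
    by rewrite ler_pM2l ?mulr_gt0 //; lra.
  rewrite -/u mulrCA mulfV ?mulr1 // gt_eqF // mulr_gt0 //.
have Bk : Bv <= k.
  rewrite -(@ler_pXn2r _ 3) // ?nnegrE ?(ltW Bv0) // k3.
  rewrite -[Bv ^+ 3]invrK ler_pV2 //.
  all: rewrite ?inE ?unitfE /= ?gt_eqF ?invr_gt0 ?exprn_gt0 ?u0. all: try done.
have xlow : forall s, a <= s -> s <= t -> k ^+ 4 <= xhat gamma D xm ym B w s ^+ 4.
  move=> s aS st.
  have s0 : 0 <= s by lra.
  have bs := bpos s s0 (le_lt_trans st tr').
  have bu : base s <= u.
    have rt0 : 0 < r - t by lra.
    have [s' [s'0 Ys' s'r]] := E2 _ rt0.
    have rs' := E1 s' s'0 Ys'.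
    have s'L : s' <= L by lra.
    have := lip s s' s0 (ltW (lt_le_trans (le_lt_trans st tr') rs')) s'L.
    rewrite Ys' => h.
    have : M * (s' - s) <= M * (3 * (r - t)) by rewrite ler_pM2l //; rewrite /a in aS; lra.
    rewrite bE /u => h2; lra.
  have xE : xhat gamma D xm ym B w s = powR (base s) (- 3^-1) by [].
  apply: lerXn2r; rewrite ?nnegrE ?k0 ?powR_ge0 //.
  rewrite -(@ler_pXn2r _ 3) // ?nnegrE ?k0 ?powR_ge0 // k3 xE cube_powR ?(ltW bs) //.
  rewrite ler_pV2 //.
  all: rewrite ?inE ?unitfE /= ?gt_eqF ?u0 ?bs. all: try done.
pose f s := xhat gamma D xm ym B w s ^+ 4.
have tL : t <= L by lra.
have Yc : {within `[0, t], continuous Y}.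
  by apply: continuous_subspaceW (Y_cont _ L0); exact: sub_itvL.
have bc : {within `[0, t], continuous base}.
  move=> s; apply: cvgB; first exact: cvg_cst.
  by apply: cvgMr; exact: Yc.
have lnc : {within `[0, t], continuous (@ln R \o base)}.
  apply: within_continuous_comp bc.
  move=> _ /[!inE] -[s sin <-]; apply: continuous_ln; apply: bpos.
    by move: sin; rewrite /= in_itv /= => /andP[].
  by move: sin; rewrite /= in_itv /= => /andP[_ st]; lra.
have fcont : {within `[0, t], continuous f}.
  apply: (@within_eq _ _ ((fun y => expR (- 3^-1 * y) ^+ 4) \o (@ln R \o base))).
    move=> s; rewrite inE /= in_itv /= => /andP[s0 st].
    have bs := bpos s s0 (le_lt_trans st tr').
    by rewrite /f /= /xhat /powR -/(base s) gt_eqF.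
  apply: within_continuous_comp lnc => y _.
  exact: cont_pow4.
have fi : mu.-integrable `[0, t] (EFin \o f) := int_cont _ _ _ fcont.
have fge0 : forall s, 0 <= f s by move=> s; rewrite /f exprn_ge0 // powR_ge0.
have spl : Rintegral mu `[0, t] f =
    Rintegral mu `[0, a] f + Rintegral mu `]a, t] f.
  by rewrite -(Rintegral_itvB fi) ?bnd_simp // addrC subrK.
have h1 : 0 <= Rintegral mu `[0, a] f by apply: Rintegral_ge0 => s _; exact: fge0.
have fi2 : mu.-integrable `]a, t] (EFin \o f).
  by apply: integrableS fi => //; apply: subset_itvr; rewrite bnd_simp.
have h2 : Rintegral mu `]a, t] (fun=> k ^+ 4) <= Rintegral mu `]a, t] f.
  apply: le_Rintegral => //.
    by apply: int_oc => z; exact: cvg_cst.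
  by move=> z; rewrite /= in_itv /= => /andP[az zt]; apply: xlow => //; exact: ltW.
have h3 : Rintegral mu `]a, t] (fun=> k ^+ 4) = k ^+ 4 * (t - a).
  rewrite Rintegral_cst // (_ : fine _ = t - a) //.
  apply: (eq_trans (congr1 fine (lebesgue_measure_itv `]a, t]))) => /=.
  rewrite lte_fin; case: ltgtP at' => //; last by move=> -> _; rewrite subrr.
have e : k ^+ 4 * (t - a) = k / (9 * M).
  have ta : t - a = r - t by rewrite /a; ring.
  have rt0 : r - t != 0 by rewrite subr_eq0 gt_eqF.
  have M9 : 9 * M != 0 by rewrite gt_eqF // mulr_gt0.
  by rewrite ta exprSr k3 /u; field; rewrite rt0 gt_eqF.
have e2 : `|A| + 1 = Bv / (9 * M).
  by rewrite /Bv mulrC mulrA mulVf ?mul1r // gt_eqF // mulr_gt0.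
have h4 : Bv / (9 * M) <= k / (9 * M) by rewrite ler_pM2r // invr_gt0 mulr_gt0.
change (A <= Rintegral mu `[0, t] f).
have hY : A <= Rintegral mu `]a, t] f.
  apply: le_trans h2; rewrite h3 e; apply: le_trans h4; rewrite -e2.
  by apply: le_trans (ler_norm A) _; rewrite lerDl.
by rewrite spl; apply: le_trans hY _; rewrite -[X in X <= _]add0r lerD2r.
Unshelve. all: by end_near.
Qed.
End core.

Theorem lemma2 (R : realType) (d : measure_display) (T : measurableType d)
    (P : probability T R) (gamma D : R) (xm ym : T -> R) (B : R -> T -> R) :
  0 < gamma -> 0 < D ->
  measurable_fun setT xm -> measurable_fun setT ym ->
  {ae P, forall w, 0 < xm w} ->
  is_brownian_motion P B ->
  indep_families P (fun i : bool => if i then xm else ym)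
                   (fun t : {t : R | 0 <= t} => B (proj1_sig t)) ->
  {ae P, forall w, (tau gamma D xm ym B w < +oo)%E} ->
  {ae P, forall w, exists r : R, tau gamma D xm ym B w = r%:E /\
      (Ttime gamma D xm ym B w t @[t --> r^'-] --> +oo%E)}.
Proof.
move=> _ _ _ _ hx hB _ htau.
case: hB => _ _ Bc _ _.
apply: filterS2 hx htau => w xw tw.
exact: (core gamma D xm ym B w (Bc w) xw tw).
Qed.
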